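(* Let $A=(a_0,\dots,a_{n-1})$ be an array of pairwise distinct numbers, $k>1$, and consider two consecutive segments $(q,j,\cdot)$ and $(q',j',\cdot)$ added by Cover-exact$(A,k)$ in consecutive iterations. Let $X=(x_1,\dots,x_k)$ be the lexicographically minimal (with respect to the sequence of positions) increasing subsequence of length $k$ of $(a_q,\dots,a_j)$, and $X'=(x'_1,\dots,x'_k)$ the lexicographically minimal increasing subsequence of length $k$ of $(a_{q'},\dots,a_{j'})$, where $x_t,x'_t$ denote positions. Then $x'_i\ge x_{i+1}$ for all $1\le i<k$.
   Context: For $i\le j$, $\mathrm{LIS}(i,j)$ denotes the length of a longest increasing subsequence of $(a_i,\dots,a_j)$. Cover-exact$(A,k)$: set $C=\emptyset$, $i=0$. Repeat: let $j$ be the smallest index $\ge i$ with $\mathrm{LIS}(i,j)\ge k$; if none exists, return $C$. Let $q$ be the largest index $\le j$ with $\mathrm{LIS}(q,j)\ge k$. Add the segment $(q,j,L)$ to $C$, where $L$ is a longest increasing subsequence of $(a_q,\dots,a_j)$, and set $i=q+1$. *)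

(* Defs.v *)
From HB Require Import structures.
From mathcomp Require Import all_boot all_order all_algebra.
Set Implicit Arguments. Unset Strict Implicit. Unset Printing Implicit Defensive.
Import Order.TTheory GRing.Theory Num.Theory.

(* Array A = (a_0,...,a_{n-1}) with n = size A, a_x = A`_x (0-indexed). *)

Definition LIS (R : realDomainType) (A : seq R) (i j : nat) : nat :=
  \max_(S : {set 'I_(size A)} |
          [forall x in S, (i <= x <= j)%N] &&
          [forall x in S, forall y in S, (x < y)%N ==> (A`_x < A`_y)%R])
     #|S|.

(* One iteration of Cover-exact(A,k) started at i adds the segment (q,j):
   j is the smallest index >= i with LIS(i,j) >= k, and q is the largest
   index <= j with LIS(q,j) >= k. *)
Definition cover_step (R : realDomainType) (A : seq R) (k i q j : nat) : Prop :=
  [/\ (i <= j < size A)%N, (k <= LIS A i j)%N &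
      (forall j', (i <= j' < j)%N -> (LIS A i j' < k)%N)] /\
  [/\ (q <= j)%N, (k <= LIS A q j)%N &
      (forall q', (q < q' <= j)%N -> (LIS A q' j < k)%N)].

(* The values taken by the loop variable i during the run of Cover-exact. *)
Inductive cover_reachable (R : realDomainType) (A : seq R) (k : nat) : nat -> Prop :=
  | cover_reach0 : cover_reachable A k 0
  | cover_reachS i q j : cover_reachable A k i -> cover_step A k i q j ->
      cover_reachable A k q.+1.

Definition inc_subseq (R : realDomainType) (A : seq R) (q j : nat) (X : seq nat) : bool :=
  [&& all (fun x => q <= x <= j)%N X, sorted ltn X &
      sorted (fun x y => (A`_x < A`_y)%R) X].

Fixpoint lexle (s t : seq nat) : bool :=
  match s, t with
  | [::], _ => true
  | _ :: _, [::] => false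
  | x :: s', y :: t' => (x < y)%N || ((x == y) && lexle s' t')
  end.

Definition lexmin_inc (R : realDomainType) (A : seq R) (k q j : nat) (X : seq nat) : Prop :=
  [/\ inc_subseq A q j X, size X = k &
      forall Y, inc_subseq A q j Y -> size Y = k -> lexle X Y].

(* Main.v *)
Require Import Defs.
From mathcomp Require Import all_boot all_order all_algebra.
From mathcomp Require Import zify.
Set Implicit Arguments. Unset Strict Implicit. Unset Printing Implicit Defensive.
Import Order.TTheory GRing.Theory Num.Theory.

Definition chain (R : realDomainType) (A : seq R) (f : nat -> nat) (m lo hi : nat) : Prop :=
  (forall u, (u < m)%N -> (lo <= f u <= hi)%N) /\
  (forall u, (u.+1 < m)%N -> (f u < f u.+1)%N /\ (A`_(f u) < A`_(f u.+1))%R).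

Lemma chain_lt (R : realDomainType) (A : seq R) f m lo hi u v :
  chain A f m lo hi -> (u < v)%N -> (v < m)%N ->
  (f u < f v)%N /\ (A`_(f u) < A`_(f v))%R.
Proof.
move=> [_ H]; elim: v => [//|v IH] uv vm.
have [h1 h2] := H v vm.
rewrite ltnS leq_eqVlt in uv; case/orP: uv => [/eqP->//|uv].
have [i1 i2] := IH uv (ltnW vm).
split; first lia.
exact: lt_trans i2 h2.
Qed.

Lemma chain_le (R : realDomainType) (A : seq R) f m lo hi u v :
  chain A f m lo hi -> (u <= v)%N -> (v < m)%N -> (f u <= f v)%N.
Proof.
move=> c; rewrite leq_eqVlt; case/orP=> [/eqP->//|uv] vm.
by have [/ltnW ? _] := chain_lt c uv vm.
Qed.

Lemma chain_LIS (R : realDomainType) (A : seq R) f m lo hi :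
  chain A f m lo hi -> (hi < size A)%N -> (m <= LIS A lo hi)%N.
Proof.
move=> c hiA.
pose x0 : 'I_(size A) := Ordinal hiA.
pose h (u : 'I_m) : 'I_(size A) := insubd x0 (f u).
have vh (u : 'I_m) : val (h u) = f u.
  rewrite /h val_insubd; case: c => [B _]; have := B u (ltn_ord u).
  by move=> /andP[_ H]; rewrite (leq_ltn_trans H hiA).
have inj : injective h.
  move=> u v /(congr1 val); rewrite !vh => e; apply/val_inj => /=.
  case: (ltngtP u v) => // uv.
  - by have [] := chain_lt c uv (ltn_ord v); rewrite e ltnn.
  - by have [] := chain_lt c uv (ltn_ord u); rewrite e ltnn.
pose S := [set h u | u : 'I_m].
have cS : #|S| = m by rewrite card_imset // card_ord.
rewrite -cS /LIS.
apply: (leq_bigmax_cond (F := fun S : {set 'I_(size A)} => #|S|)).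
apply/andP; split.
  apply/forall_inP => x /imsetP[u _ ->]; rewrite vh; case: c => B _; exact: B.
apply/forall_inP => x /imsetP[u _ ->]; apply/forall_inP => y /imsetP[v _ ->].
apply/implyP; rewrite !vh => fuv.
have uv : (u < v)%N.
  case: (ltngtP u v) => // vu.
  - by have [] := chain_lt c vu (ltn_ord u); lia.
  - by move: vu fuv => /val_inj ->; rewrite ltnn.
by have [] := chain_lt c uv (ltn_ord v).
Qed.
Definition catf (f : nat -> nat) (a : nat) (g : nat -> nat) :=
  fun u => if (u < a)%N then f u else g (u - a).

Lemma chain_cat (R : realDomainType) (A : seq R) f a g b lo hi :
  chain A f a lo hi -> chain A g b lo hi -> (0 < a)%N -> (0 < b)%N ->
  (f a.-1 < g 0)%N -> (A`_(f a.-1) < A`_(g 0))%R ->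
  chain A (catf f a g) (a + b) lo hi.
Proof.
move=> [B1 C1] [B2 C2] a0 b0 j1 j2; split.
  move=> u um; rewrite /catf; case: ifP => ua; first exact: B1.
  apply: B2; lia.
move=> u um; rewrite /catf.
case: (ltnP u.+1 a) => ua.
  by rewrite (ltnW ua); apply: C1.
case: (ltnP u a) => ua'.
  have -> : u = a.-1 by lia.
  by have -> : (a.-1.+1 - a = 0)%N by lia.
have -> : (u.+1 - a = (u - a).+1)%N by lia.
apply: C2; lia.
Qed.

Lemma chain_shift (R : realDomainType) (A : seq R) f m lo hi s m' :
  chain A f m lo hi -> (s + m' <= m)%N -> chain A (fun u => f (s + u)) m' lo hi.
Proof.
move=> [B C] h; split=> u um.
  apply: B; lia.
rewrite addnS; apply: C; lia.
Qed.

Lemma chain_bounds (R : realDomainType) (A : seq R) f m lo hi lo' hi' :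
  chain A f m lo hi -> (0 < m)%N -> (lo' <= f 0)%N -> (f m.-1 <= hi')%N ->
  chain A f m lo' hi'.
Proof.
move=> c m0 h1 h2; split; last by case: c.
move=> u um; apply/andP; split.
  by apply: leq_trans h1 (chain_le c _ um).
by apply: leq_trans (chain_le c _ _) h2; lia.
Qed.

Lemma chain_of (R : realDomainType) (A : seq R) q j X :
  inc_subseq A q j X -> chain A (nth 0 X) (size X) q j.
Proof.
case/and3P=> /allP a /(sortedP 0) s1 /(sortedP 0) s2; split.
  by move=> u um; apply: a; apply: mem_nth.
by move=> u um; split; [apply: s1|apply: s2].
Qed.

Lemma seq_of (R : realDomainType) (A : seq R) q j f m :
  chain A f m q j -> inc_subseq A q j (mkseq f m).
Proof.
case=> B C; apply/and3P; split.
- apply/allP => x /mapP[u]; rewrite mem_iota => /andP[_ um] ->; apply: B; lia.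
- apply/(sortedP 0) => u; rewrite size_mkseq => um.
  rewrite !nth_mkseq; [by case: (C u um)|lia|lia].
- apply/(sortedP 0) => u; rewrite size_mkseq => um.
  rewrite !nth_mkseq; [by case: (C u um)|lia|lia].
Qed.

Lemma lex_not (X Z : seq nat) s :
  (s < size X)%N -> (s < size Z)%N ->
  (forall u, (u < s)%N -> nth 0 X u = nth 0 Z u) ->
  (nth 0 Z s < nth 0 X s)%N -> ~~ lexle X Z.
Proof.
elim: s X Z => [|s IH] [|x X] [|z Z] //= hx hz e lt.
  by rewrite ltnNge (ltnW lt) /= eq_sym (ltn_eqF lt).
have -> : x = z by apply: (e 0).
rewrite ltnn eqxx /=; apply: IH => // u us; exact: (e u.+1).
Qed.
Lemma chain_seg (R : realDomainType) (A : seq R) f m lo hi a b lo' hi' :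
  chain A f m lo hi -> (a < b)%N -> (b <= m)%N -> (lo' <= f a)%N -> (f b.-1 <= hi')%N ->
  chain A (fun u => f (a + u)) (b - a) lo' hi'.
Proof.
move=> c ab bm h1 h2.
apply: chain_bounds; first apply: (chain_shift c); try lia.
- by rewrite addn0.
- by have -> : (a + (b - a).-1 = b.-1)%N by lia.
Qed.

Lemma catf_lt f a g u : (u < a)%N -> catf f a g u = f u.
Proof. by rewrite /catf => ->. Qed.

Lemma catf_ge f a g u : (a <= u)%N -> catf f a g u = g (u - a).
Proof. by rewrite /catf ltnNge => ->. Qed.

Lemma chain_contra (R : realDomainType) (A : seq R) f m lo hi k :
  chain A f m lo hi -> m = k -> (hi < size A)%N -> (LIS A lo hi < k)%N -> False.
Proof. by move=> c <- h; rewrite ltnNge (chain_LIS c h). Qed.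

Lemma distinct (R : realDomainType) (A : seq R) u v :
  uniq A -> (u < size A)%N -> (v < size A)%N -> u != v -> (A`_u != A`_v)%R.
Proof. by move=> uA hu hv; rewrite nth_uniq. Qed.
Ltac slia := repeat match goal with
 | H : chain _ _ _ _ _ |- _ => clear H
 | H : forall _, _ |- _ => clear H
 | H : context [nth 0%R _ _] |- _ => clear H
 | H : lexmin_inc _ _ _ _ _ |- _ => clear H
 | H : uniq _ |- _ => clear H
 end; lia.

Unset Implicit Arguments.
Theorem lemma2 (R : realDomainType) (A : seq R) (k i q j q' j' : nat)
    (X X' : seq nat) :
  uniq A -> (1 < k)%N ->
  cover_reachable A k i ->
  cover_step A k i q j ->
  cover_step A k q.+1 q' j' ->
  lexmin_inc A k q j X ->
  lexmin_inc A k q' j' X' ->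
  forall t, (0 < t < k)%N -> (nth 0 X t <= nth 0 X' t.-1)%N.
Proof.
move=> uA k1 _ [[/andP[ij jA] LISij Fj] [qj LISqj Fq]]
  [[/andP[q1j' j'A] LISq1j' Fj'] [q'j' LISq'j' Fq']]
  [incX sX minX] [incY sY _].
have cx := chain_of incX; rewrite sX in cx.
have cy := chain_of incY; rewrite sY in cy.
set x := nth 0 X in cx *; set y := nth 0 X' in cy *.
have iq : (i <= q)%N.
  rewrite leqNgt; apply/negP => qi.
  have h : (q < i <= j)%N by rewrite qi ij.
  by have := Fq i h; rewrite ltnNge LISij.
have qq' : (q < q')%N.
  rewrite ltnNge; apply/negP => qi.
  have h : (q' < q.+1 <= j')%N by rewrite ltnS qi q1j'.
  by have := Fq' q.+1 h; rewrite ltnNge LISq1j'.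
have [Bx Cx] := cx; have [By Cy] := cy.
have k0 : (0 < k)%N by slia.
have xl : (x k.-1 <= j)%N by have := Bx k.-1 ltac:(slia); slia.
have x0b : (q <= x 0)%N by have := Bx 0 k0; slia.
have yl : (y k.-1 <= j')%N by have := By k.-1 ltac:(slia); slia.
have y0b : (q' <= y 0)%N by have := By 0 k0; slia.
have x0k := chain_lt cx (_ : (0 < k.-1)%N) (_ : (k.-1 < k)%N).
have y0k := chain_lt cy (_ : (0 < k.-1)%N) (_ : (k.-1 < k)%N).
have x0q : x 0 = q.
  apply/eqP; rewrite eqn_leq x0b andbT leqNgt; apply/negP => qx0.
  have h : (q < q.+1 <= j)%N.
    have [] := x0k ltac:(slia) ltac:(slia); slia.
  apply: (chain_contra (chain_bounds cx k0 qx0 xl)) => //; last exact: Fq.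
have [x0kp x0kv] := x0k ltac:(slia) ltac:(slia).
have [y0kp y0kv] := y0k ltac:(slia) ltac:(slia).
have F1 : (LIS A q.+1 j < k)%N by apply: Fq; slia.
have F2 : (LIS A q.+1 j'.-1 < k)%N by apply: Fj'; slia.
have F4 : (LIS A i j.-1 < k)%N by apply: Fj; slia.
have jA' : (j.-1 < size A)%N by slia.
have j'A' : (j'.-1 < size A)%N by slia.
have xB u : (u < k)%N -> (x u < size A)%N by move/Bx; slia.
have yB u : (u < k)%N -> (y u < size A)%N by move/By; slia.
clear LISij LISqj LISq1j' LISq'j' Fj Fq Fj' Fq' x0k y0k x0kv y0kv incX incY q1j' q'j' ij qj.
suff M : forall s, (s < k.-1)%N -> (x s.+1 <= y s)%N.
  move=> t /andP[t0 tk]; have := M t.-1; rewrite prednK //; apply; slia.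
elim/ltn_ind => s IH sk.
rewrite leqNgt; apply/negP => ys.
have xs1j : (x s.+1 <= j)%N by have := Bx s.+1 ltac:(slia); slia.
have x1q : (q < x s.+1)%N.
  by have [] := chain_lt cx (_ : (0 < s.+1)%N) (_ : (s.+1 < k)%N); slia.
have a1 : (A`_(x s.+1) < A`_(y s))%R.
  rewrite ltNge le_eqVlt negb_or; apply/andP; split.
    rewrite eq_sym; apply: distinct => //; [apply: xB; slia|apply: yB; slia|slia].
  apply/negP => lt.
  have c1 := chain_seg (a := 0) (b := s.+1) (lo' := q.+1) (hi' := j) cy
    ltac:(slia) ltac:(slia) ltac:(simpl; slia) ltac:(simpl; slia).
  have c2 := chain_seg (a := s.+1) (b := k) (lo' := q.+1) (hi' := j) cx
    ltac:(slia) ltac:(slia) ltac:(simpl; slia) ltac:(simpl; slia).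
  have c3 := chain_cat c1 c2 ltac:(slia) ltac:(slia).
  rewrite /= add0n subn0 addn0 /= in c3.
  by apply: (chain_contra (c3 ys lt)) => //; slia.
have cc : forall m, (m < k.-1)%N -> (x m.+1 < y m)%N -> (A`_(y m) < A`_(x m.+1))%R.
  move=> m mk xy.
  have ymk : (y m < y k.-1)%N.
    by have [] := chain_lt cy (_ : (m < k.-1)%N) (_ : (k.-1 < k)%N); slia.
  have ykk : (y k.-2 < y k.-1)%N.
    have := Cy k.-2 ltac:(slia); rewrite (_ : k.-2.+1 = k.-1); [case=> //|slia].
  have ymq : (y 0 <= y m)%N by apply: (chain_le cy); slia.
  have x1q' : (q < x 1)%N.
    by have [] := chain_lt cx (_ : (0 < 1)%N) (_ : (1 < k)%N); slia.
  rewrite ltNge le_eqVlt negb_or; apply/andP; split.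
    apply: distinct => //; [apply: xB; slia|apply: yB; slia|slia].
  apply/negP => lt.
  have c1 := chain_seg (a := 1) (b := m.+2) (lo' := q.+1) (hi' := j'.-1) cx
    ltac:(slia) ltac:(slia) ltac:(simpl; slia) ltac:(simpl; slia).
  have c2 := chain_seg (a := m) (b := k.-1) (lo' := q.+1) (hi' := j'.-1) cy
    ltac:(slia) ltac:(slia) ltac:(simpl; slia) ltac:(simpl; slia).
  have c3 := chain_cat c1 c2 ltac:(slia) ltac:(slia).
  rewrite /= addn0 (_ : (1 + (m.+2 - 1).-1 = m.+1)%N) in c3; last slia.
  by apply: (chain_contra (c3 xy lt)) => //; slia.
have xys : (x s < y s)%N.
  case: (posnP s) => [->|s0]; first slia.
  have := IH s.-1 ltac:(slia) ltac:(slia); rewrite prednK //.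
  by have [] := Cy s.-1 ltac:(slia); rewrite prednK //; slia.
have xysv : (A`_(x s) < A`_(y s))%R.
  by have [_ h] := Cx s ltac:(slia); apply: lt_trans h a1.
have sk' : (s < k)%N by slia.
have ysq : (q <= y s)%N by case/andP: (By s sk') => h _; apply: leq_trans (ltnW qq') h.
have xsq : (q <= x s)%N by case/andP: (Bx s sk').
case: (boolP [exists m : 'I_k, (s < m < k.-1)%N && (x m.+1 <= y m)%N]).
  case/existsP => m0 Pm0.
  have exP : exists m, (s < m < k.-1)%N && (x m.+1 <= y m)%N by exists m0.
  case: (ex_minnP exP) => m /andP[/andP[sm mk] xym] minm.
  have nosw : forall m', (s <= m' < m)%N -> (y m' < x m'.+1)%N.
    move=> m' /andP[sm' m'm].
    case: (ltngtP s m') => [sm''|m's|<-//]; last by slia.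
    rewrite ltnNge; apply/negP => h.
    have := minm m' ltac:(rewrite sm'' h /=; slia); slia.
  have ym1 := nosw m.-1 ltac:(slia).
  rewrite prednK in ym1; last slia.
  have ymm : (y m.-1 < y m)%N /\ (A`_(y m.-1) < A`_(y m))%R.
    by have := Cy m.-1 ltac:(slia); rewrite prednK //; slia.
  have jv : (A`_(y m.-1) < A`_(x m.+1))%R.
    apply: lt_le_trans ymm.2 _.
    move: xym; rewrite leq_eqVlt => /orP[/eqP->//|lt].
    exact: ltW (cc m mk lt).
  have xmj : (x m <= j)%N by have := Bx m ltac:(slia); slia.
  have xmm : (x m < x m.+1)%N by have [] := Cx m ltac:(slia).
  have yle : (y s <= y m.-1)%N by apply: (chain_le cy); slia.
  have ci1 := chain_seg (a := s) (b := m) (lo' := q) (hi' := j) cy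
    ltac:(slia) ltac:(slia) ltac:(simpl; slia) ltac:(simpl; slia).
  have ci2 := chain_seg (a := m.+1) (b := k) (lo' := q) (hi' := j) cx
    ltac:(slia) ltac:(slia) ltac:(simpl; slia) ltac:(simpl; slia).
  have ci := chain_cat ci1 ci2 ltac:(slia) ltac:(slia).
  rewrite /= addn0 (_ : (s + (m - s).-1 = m.-1)%N) in ci; last slia.
  have ci' := ci ltac:(slia) jv.
  have cp := chain_seg (a := 0) (b := s.+1) (lo' := q) (hi' := j) cx
    ltac:(slia) ltac:(slia) ltac:(simpl; slia) ltac:(simpl; slia).
  have co := chain_cat cp ci' ltac:(slia) ltac:(slia).
  rewrite /= add0n subn0 catf_lt ?addn0 in co; last slia.
  have co' := co xys xysv.
  rewrite (_ : (s.+1 + (m - s + (k - m.+1)) = k)%N) in co'; last slia.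
  have incZ := seq_of co'.
  have := minX _ incZ (size_mkseq _ _).
  apply/negP; apply: (lex_not (s := s.+1)).
  - by rewrite sX; slia.
  - by rewrite size_mkseq; slia.
  - move=> u us; rewrite nth_mkseq; last slia.
    by rewrite catf_lt // add0n.
  - rewrite nth_mkseq; last slia.
    rewrite catf_ge // subnn catf_lt; last slia.
    by rewrite addn0.
rewrite negb_exists => /forallP nosw.
have ylast : (y k.-2 < x k.-1)%N.
  have k2k : (k.-2 < k)%N by slia.
  have := nosw (Ordinal k2k); rewrite /= negb_and.
  case: (ltngtP s k.-2) => [sk2|ks|e].
  - rewrite /= (_ : k.-2.+1 = k.-1); last slia.
    rewrite leqnn /=.
    by rewrite -ltnNge.
  - slia.
  - by move=> _; rewrite -e (_ : k.-1 = s.+1) //; slia.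
have yle : (y s <= y k.-2)%N by apply: (chain_le cy); slia.
have c1 := chain_seg (a := 0) (b := s.+1) (lo' := i) (hi' := j.-1) cx
  ltac:(slia) ltac:(slia) ltac:(simpl; slia) ltac:(simpl; slia).
have c2 := chain_seg (a := s) (b := k.-1) (lo' := i) (hi' := j.-1) cy
  ltac:(slia) ltac:(slia) ltac:(simpl; slia) ltac:(simpl; slia).
have c3 := chain_cat c1 c2 ltac:(slia) ltac:(slia).
rewrite /= add0n subn0 addn0 in c3.
by apply: (chain_contra (c3 xys xysv)) => //; slia.
Qed.
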